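(* Let $M_G$ be a mixed graph, let $W\subset V(M_G)$ be non-empty, let $U=V(M_G)\setminus W$, and suppose $M_G$ contains no arc $\overrightarrow{uw}$ with $u\in U$ and $w\in W$. Let $M_{G'}$ be obtained from $M_G$ by replacing every arc $\overrightarrow{wu}$ ($w\in W$, $u\in U$) with the undirected edge $\{w,u\}$ and every undirected edge $\{u,w\}$ ($u\in U$, $w\in W$) with the arc $\overrightarrow{uw}$ (all other edges unchanged). Then $M_{G'}$ and $M_G$ are cospectral.
   Context: A mixed graph $M_G$ is obtained from a finite simple graph $G$ by orienting the edges of some subset of $E(G)$; oriented edges are arcs $\overrightarrow{uv}$, the others are undirected edges $\{u,v\}$. With $\omega=\frac{1+\mathbf{i}\sqrt3}{2}$, the matrix $N(M_G)$ has $(u,v)$-entry $\omega$ if $\overrightarrow{uv}$ is an arc, $\bar\omega$ if $\overrightarrow{vu}$ is an arc, $1$ if $\{u,v\}$ is an undirected edge, $0$ otherwise. Two mixed graphs are cospectral if their matrices $N$ have the same multiset of eigenvalues. *)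

(* Defs.v *)
From HB Require Import structures.
From mathcomp Require Import all_boot all_order all_algebra all_field.
Set Implicit Arguments. Unset Strict Implicit. Unset Printing Implicit Defensive.
Import Order.TTheory GRing.Theory Num.Theory.
Local Open Scope ring_scope.

(* A mixed graph on vertex set 'I_n: the underlying simple graph is [adj]
   (symmetric, irreflexive); [arc u v] means the edge {u,v} is oriented as
   the arc u -> v.  Edges of [adj] with neither orientation are undirected. *)
Definition mixed_graph (n : nat) (adj arc : rel 'I_n) : Prop :=
  [/\ forall u v, adj u v = adj v u,
      forall u, ~~ adj u u,
      forall u v, arc u v -> adj u v
    & forall u v, arc u v -> ~~ arc v u].

Definition undirected_edge (n : nat) (adj arc : rel 'I_n) (u v : 'I_n) : bool :=
  [&& adj u v, ~~ arc u v & ~~ arc v u].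

Definition omega : algC := (1 + 'i * sqrtC 3) / 2.

Definition Nmat (n : nat) (adj arc : rel 'I_n) : 'M[algC]_n :=
  \matrix_(u, v)
    (if arc u v then omega
     else if arc v u then omega^*
     else if adj u v then 1 else 0).

(* Multiset of eigenvalues: the multiplicity of each eigenvalue as a root of
   the characteristic polynomial. *)
Definition cospectral (n : nat) (A B : 'M[algC]_n) : Prop :=
  forall z : algC, mup z (char_poly A) = mup z (char_poly B).

Definition switch_arcs (n : nat) (W : {set 'I_n}) (adj arc : rel 'I_n) : rel 'I_n :=
  fun x y =>
    if (x \notin W) && (y \in W) then undirected_edge adj arc x y
    else if (x \in W) && (y \notin W) then false
    else arc x y.

(* Main.v *)
Require Import Defs.
From HB Require Import structures.
From mathcomp Require Import all_boot all_order all_algebra all_field.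
Import Order.TTheory GRing.Theory Num.Theory.
Local Open Scope ring_scope.

Lemma omega_conj : omega * omega^* = 1.
have h3 : (sqrtC 3 : algC)^* = sqrtC 3.
  by apply: conj_Creal; apply: ger0_real; rewrite sqrtC_ge0 ler0n.
have -> : omega^* = (1 - 'i * sqrtC 3) / 2.
  by rewrite /omega fmorph_div /= raddfD /= rmorphM /= rmorph1 conjCi h3 rmorph_nat mulNr.
have ha : ('i * sqrtC 3) ^+ 2 = - 3 :> algC by rewrite exprMn sqrCi sqrtCK mulN1r.
rewrite /omega mulf_div.
have -> : (1 + 'i * sqrtC 3) * (1 - 'i * sqrtC 3) = 1 - ('i * sqrtC 3) ^+ 2 :> algC.
  by rewrite mulrDl mul1r mulrBr mulr1 expr2; rewrite addrA subrK.
rewrite ha opprK -natrM (_ : 1 + 3 = (2 * 2)%:R) ?mulfV // ?pnatr_eq0 //.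
Qed.

Lemma omega_conj' : omega^* * omega = 1.
Proof. by rewrite mulrC omega_conj. Qed.

Lemma omega_neq0 : omega^* != 0.
Proof. by apply/eqP=> h; move: omega_conj; rewrite h mulr0 => /eqP; rewrite eq_sym oner_eq0. Qed.

Theorem theorem4p1 (n : nat) (adj arc : rel 'I_n) (W : {set 'I_n}) :
  mixed_graph adj arc ->
  W != set0 ->
  (forall u w : 'I_n, u \notin W -> w \in W -> ~~ arc u w) ->
  cospectral (Nmat adj (switch_arcs W adj arc)) (Nmat adj arc).
Proof.
move=> [adjC adjI arcA arcAs] _ hUW.
pose e (i : 'I_n) : algC := if i \in W then omega^* else 1.
have key : forall i j, Nmat adj (switch_arcs W adj arc) i j * e j
                       = e i * Nmat adj arc i j.
  move=> i j; rewrite !mxE /switch_arcs /e.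
  case: (boolP (i \in W)) => iW; case: (boolP (j \in W)) => jW /=.
  - by rewrite mulrC.
  - rewrite /undirected_edge; move: (hUW j i jW iW) (introT implyP (arcA i j)) (introT implyP (arcA j i)) (introT eqP (adjC i j)) (introT implyP (arcAs i j)).
    by case: (arc i j); case: (arc j i); case: (adj i j); case: (adj j i) => //= *;
      rewrite ?mulr1 ?mul1r ?mulr0 ?mul0r ?omega_conj ?omega_conj'.
  - rewrite /undirected_edge; move: (hUW i j iW jW) (introT implyP (arcA i j)) (introT implyP (arcA j i)) (introT eqP (adjC i j)) (introT implyP (arcAs i j)).
    by case: (arc i j); case: (arc j i); case: (adj i j); case: (adj j i) => //= *;
      rewrite ?mulr1 ?mul1r ?mulr0 ?mul0r ?omega_conj ?omega_conj'.
  - by rewrite mulrC.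
pose D := diag_mx (\row_i (e i)%:P).
have E : char_poly_mx (Nmat adj (switch_arcs W adj arc)) *m D
         = D *m char_poly_mx (Nmat adj arc).
  apply/matrixP=> i j; rewrite mul_mx_diag mul_diag_mx !mxE.
  rewrite mulrBl mulrBr -!polyCM.
  have := key i j; rewrite !mxE => ->.
  congr (_ - _).
  by case: eqVneq => [->|_]; rewrite ?mulr0n ?mulr1n ?mul0r ?mulr0 // mulrC.
have D0 : \det D != 0.
  rewrite det_diag; apply/prodf_neq0 => i _; rewrite mxE polyC_eq0 /e.
  by case: (i \in W); rewrite ?omega_neq0 ?oner_eq0.
move=> z; congr (mup z _).
rewrite /char_poly; apply: (mulIf D0).
by rewrite -det_mulmx E det_mulmx mulrC.
Qed.
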